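(* Let $K=4m$ with $m\ge 5$ and suppose $t=KM/N=K-4$. Then the D2D coded caching rate $R=N/M-1$ is achievable with subpacketization $$F=\frac{K(K-4)\big(3K(K-4)+8\big)}{8}.$$
   Context: D2D coded caching setting: there are $N\ge 1$ files $W_1,\dots,W_N$ and $K\ge 2$ users, each with a cache of size $M$ files, $0<M\le N$, and $t:=KM/N$ is assumed to be a positive integer. A D2D coded caching scheme with (uncoded placement and) subpacketization $F\in\mathbb{N}_+$ is defined as follows. Fix a packet size $b\ge 1$; each file is a sequence of $F$ packets $W_n=(W_n^{(1)},\dots,W_n^{(F)})$, $W_n^{(j)}\in\{0,1\}^b$. Placement: each user $k\in[K]$ stores the packets $\{W_n^{(j)}:(n,j)\in Z_k\}$ for a fixed index set $Z_k\subseteq[N]\times[F]$ with $|Z_k|\le MF$ (independent of demands and file contents). Delivery: for every demand vector $\mathbf d=(d_1,\dots,d_K)\in[N]^K$, each user $k$ broadcasts to all other users $\ell_k(\mathbf d)\in\mathbb{N}$ blocks in $\{0,1\}^b$, each a deterministic function of the packets stored by user $k$; it is required that for all file contents each user $k$ can recover all $F$ packets of $W_{d_k}$ from its stored packets and the blocks sent by the other users. The rate is $R=\max_{\mathbf d}\frac{1}{F}\sum_{k=1}^K\ell_k(\mathbf d)$ (transmitted bits normalized by the file size $Fb$). The rate $R$ is achievable with subpacketization $F$ if such a scheme with rate $R$ exists for every packet size $b\ge 1$. *)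

(* Defs.v *)
From mathcomp Require Import all_boot all_order all_algebra.
Set Implicit Arguments. Unset Strict Implicit. Unset Printing Implicit Defensive.
Import Order.TTheory GRing.Theory Num.Theory.

Notation packet b := (b.-tuple bool).

Notation demand N K := {ffun 'I_K -> 'I_N}.

Definition cache_view (N F b : nat) (Z : {set 'I_N * 'I_F})
  (W : 'I_N -> 'I_F -> packet b) : {ffun 'I_N * 'I_F -> option (packet b)} :=
  [ffun nj => if nj \in Z then Some (W nj.1 nj.2) else None].

(* A D2D coded caching scheme (uncoded placement) with N files, K users,
   cache size M (in files), subpacketization F, packet size b. *)
Record D2D_scheme (N K F b : nat) (M : rat) := {
  placement : 'I_K -> {set 'I_N * 'I_F};
  len : 'I_K -> demand N K -> nat;
  enc : 'I_K -> demand N K ->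
        {ffun 'I_N * 'I_F -> option (packet b)} -> seq (packet b);
  dec : 'I_K -> demand N K ->
        {ffun 'I_N * 'I_F -> option (packet b)} ->
        ('I_K -> seq (packet b)) -> 'I_F -> packet b;
  cache_ok : forall k, (#|placement k|%:R <= M * F%:R)%R;
  enc_len : forall k d c, size (enc k d c) = len k d;
  dec_ok : forall (d : demand N K) (k : 'I_K) (W : 'I_N -> 'I_F -> packet b) (j : 'I_F),
    dec k d (cache_view (placement k) W)
        (fun k' => if k' == k then [::]
                   else enc k' d (cache_view (placement k') W)) j
    = W (d k) j
}.

Definition load (N K F b : nat) (M : rat) (S : D2D_scheme N K F b M)
  (d : demand N K) : rat :=
  ((\sum_(k < K) len S k d)%:R / F%:R)%R.

Definition has_rate (N K F b : nat) (M : rat) (S : D2D_scheme N K F b M) (R : rat) :=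
  (forall d, (load S d <= R)%R) /\ (exists d, load S d = R).

Definition achievable_with (N K : nat) (M R : rat) (F : nat) :=
  0 < F /\
  forall b, 1 <= b -> exists S : D2D_scheme N K F b M, has_rate S R.

(* Main.v *)
Require Import Defs.
From mathcomp Require Import all_boot all_order all_algebra.
From mathcomp Require Import zify ring lra.
Set Implicit Arguments. Unset Strict Implicit. Unset Printing Implicit Defensive.

Section Xor.
Variable b : nat.
Definition xorp (a c : packet b) : packet b := [tuple tnth a i (+) tnth c i | i < b].
Definition zerop : packet b := [tuple false | i < b].
Lemma xorpA a c e : xorp a (xorp c e) = xorp (xorp a c) e.
Proof. by apply: eq_from_tnth => i; rewrite !tnth_mktuple addbA. Qed.
Lemma xorpK a c : xorp (xorp a c) c = a.
Proof. by apply: eq_from_tnth => i; rewrite !tnth_mktuple -addbA addbb addbF. Qed.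
Lemma xorpC a c : xorp a c = xorp c a.
Proof. by apply: eq_from_tnth => i; rewrite !tnth_mktuple addbC. Qed.

Definition xors (s : seq (packet b)) := foldr xorp zerop s.

Lemma xors_split (T : eqType) (g : T -> packet b) (s : seq T) k :
  uniq s -> k \in s ->
  xors (map g s) = xorp (g k) (xors (map g (filter (predC1 k) s))).
Proof.
elim: s => //= a s IH /andP [ans us]; rewrite inE => /orP [/eqP ->|ks].
  rewrite eqxx /=.
  have -> : filter (predC1 a) s = s.
    by apply/all_filterP/allP => x xs /=; apply: contraNneq ans => <-.
  by [].
have ak : a != k by apply: contraNneq ans => ->.
rewrite /= ak /= (IH us ks) /=.
by rewrite xorpA (xorpC (g a)) -xorpA.
Qed.
End Xor.

Section Generic.
Variables (N K F : nat) (M R : rat) (P Tr : finType).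
Variables (cmp : P -> 'I_K -> bool) (src : Tr -> 'I_K) (rcv : Tr -> 'I_K -> bool)
  (pk : Tr -> 'I_K -> P) (tr : P -> 'I_K -> Tr).
Hypothesis HPF : #|P| = F.
Hypothesis A1 : forall t k, rcv t k -> cmp (pk t k) k.
Hypothesis A2 : forall t k k', rcv t k -> rcv t k' -> k != k' -> ~~ cmp (pk t k') k.
Hypothesis A3 : forall t k, rcv t k -> ~~ cmp (pk t k) (src t).
Hypothesis A4 : forall p k, cmp p k -> rcv (tr p k) k /\ pk (tr p k) k = p.

Definition eF (p : P) : 'I_F := cast_ord HPF (enum_rank p).
Definition eF' (j : 'I_F) : P := enum_val (cast_ord (esym HPF) j).
Lemma eFK : cancel eF eF'.
Proof. by move=> p; rewrite /eF /eF' cast_ordK enum_rankK. Qed.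
Lemma eF'K : cancel eF' eF.
Proof. by move=> j; rewrite /eF /eF' enum_valK cast_ordKV. Qed.

Variable b : nat.
Definition getp (o : option (packet b)) := odflt (zerop b) o.
Definition plc (k : 'I_K) : {set 'I_N * 'I_F} := [set nj | ~~ cmp (eF' nj.2) k].
Definition lenG (k : 'I_K) (d : demand N K) := #|[set t | src t == k]|.
Definition rcvs t := [seq k' <- enum 'I_K | rcv t k'].
Definition xorall (d : demand N K) (c : {ffun 'I_N * 'I_F -> option (packet b)}) t :=
  xors [seq getp (c (d k', eF (pk t k'))) | k' <- rcvs t].
Definition encG (k : 'I_K) (d : demand N K) c :=
  [seq xorall d c t | t <- enum [set t | src t == k]].
Definition decG (k : 'I_K) (d : demand N K) (c : {ffun 'I_N * 'I_F -> option (packet b)})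
  (msgs : 'I_K -> seq (packet b)) (j : 'I_F) : packet b :=
  let p := eF' j in
  if ~~ cmp p k then getp (c (d k, j)) else
  let t := tr p k in
  xorp (nth (zerop b) (msgs (src t)) (index t (enum [set t' | src t' == src t])))
       (xors [seq getp (c (d k', eF (pk t k'))) | k' <- filter (predC1 k) (rcvs t)]).

Lemma plcE k n j : ((n, j) \in plc k) = ~~ cmp (eF' j) k.
Proof. by rewrite inE. Qed.

Lemma encG_len k d c : size (encG k d c) = lenG k d.
Proof. by rewrite size_map -cardE. Qed.

Lemma cvE k (W : 'I_N -> 'I_F -> packet b) n j : ~~ cmp (eF' j) k ->
  getp (cache_view (plc k) W (n, j)) = W n j.
Proof. by move=> h; rewrite /getp /cache_view ffunE plcE h. Qed.

Lemma decG_ok (d : demand N K) (k : 'I_K) (W : 'I_N -> 'I_F -> packet b) (j : 'I_F) :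
    decG k d (cache_view (plc k) W)
        (fun k' => if k' == k then [::]
                   else encG k' d (cache_view (plc k') W)) j
    = W (d k) j.
Proof.
rewrite /decG; case: ifP => hc; first by rewrite cvE ?hc.
move/negbFE: hc => hc.
have [rt pt] := A4 hc.
set t := tr (eF' j) k in rt pt *.
have hsk : src t != k.
  by apply/eqP => e; move: (A3 rt); rewrite e pt hc.
rewrite (negbTE hsk) /encG.
have tin : t \in enum [set t' | src t' == src t] by rewrite mem_enum inE.
rewrite (nth_map t) ?index_mem // nth_index //.
rewrite /xorall.
have kin : k \in rcvs t by rewrite mem_filter rt mem_enum.
have ur : uniq (rcvs t) by rewrite filter_uniq // enum_uniq.
rewrite (xors_split _ ur kin) cvE; last by rewrite eFK A3.
rewrite pt eF'K.
have -> : [seq getp (cache_view (plc (src t)) W (d k', eF (pk t k'))) | k' <- filter (predC1 k) (rcvs t)]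
  = [seq getp (cache_view (plc k) W (d k', eF (pk t k'))) | k' <- filter (predC1 k) (rcvs t)].
  apply/eq_in_map => k'; rewrite mem_filter /= mem_filter => /andP [kk' /andP [rk' _]].
  rewrite !cvE ?eFK ?A3 //; apply: A2 => //; by rewrite eq_sym.
by rewrite xorpK.
Qed.
End Generic.

Section GenAch.
Variables (N K F : nat) (M R : rat) (P Tr : finType).
Variables (cmp : P -> 'I_K -> bool) (src : Tr -> 'I_K) (rcv : Tr -> 'I_K -> bool)
  (pk : Tr -> 'I_K -> P) (tr : P -> 'I_K -> Tr).
Hypothesis HPF : #|P| = F.
Hypothesis A1 : forall t k, rcv t k -> cmp (pk t k) k.
Hypothesis A2 : forall t k k', rcv t k -> rcv t k' -> k != k' -> ~~ cmp (pk t k') k.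
Hypothesis A3 : forall t k, rcv t k -> ~~ cmp (pk t k) (src t).
Hypothesis A4 : forall p k, cmp p k -> rcv (tr p k) k /\ pk (tr p k) k = p.
Hypothesis Hc : forall k, ((N * #|[set p | ~~ cmp p k]|)%:R <= M * F%:R)%R.
Hypothesis Hr : (#|Tr|%:R / F%:R = R)%R.
Hypothesis HF0 : 0 < F.
Hypothesis HN0 : 0 < N.

Lemma card_plc k : #|plc N cmp HPF k| = N * #|[set p | ~~ cmp p k]|.
Proof.
have -> : plc N cmp HPF k = setX [set: 'I_N] [set j | ~~ cmp (eF' HPF j) k].
  by apply/setP => -[n j]; rewrite !inE.
rewrite cardsX cardsT card_ord; congr (_ * _).
have -> : [set p | ~~ cmp p k] = eF' HPF @: [set j | ~~ cmp (eF' HPF j) k].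
  apply/setP => p; rewrite inE; apply/idP/imsetP.
    by move=> h; exists (eF HPF p); rewrite ?inE eFK.
  by move=> [j]; rewrite inE => h ->.
by rewrite card_imset //; apply: can_inj (eF'K HPF).
Qed.

Lemma sum_len : \sum_(k < K) #|[set t | src t == k]| = #|Tr|.
Proof.
rewrite -sum1_card (partition_big src xpredT) //=.
by apply: eq_bigr => k _; rewrite -sum1_card; apply: eq_bigl => t; rewrite inE.
Qed.

Lemma gen_ach : achievable_with N K M R F.
Proof.
split => // b _.
pose S := @Build_D2D_scheme N K F b M (plc N cmp HPF) (@lenG N K Tr src) (@encG N K F P Tr src rcv pk HPF b)
  (@decG N K F P Tr cmp src rcv pk tr HPF b)
  (fun k => eq_ind_r (fun x => (x%:R <= M * F%:R)%R) (Hc k) (card_plc k))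
  (fun k d c => encG_len src rcv pk HPF k d c) (@decG_ok N K F P Tr cmp src rcv pk tr HPF A2 A3 A4 b).
exists S; rewrite /has_rate /load /=.
have E : forall d, ((\sum_(k < K) lenG src k d)%:R / F%:R = R)%R.
  by move=> d; rewrite /lenG sum_len.
split; first by move=> d; rewrite E.
by exists [ffun _ => Ordinal HN0]; rewrite E.
Qed.
End GenAch.

Lemma card_lt n a : #|[set i : 'I_n | i < a]| = minn a n.
Proof.
rewrite -sum1_card (big_mkcond (fun i => i \in _)) /=.
under eq_bigr do rewrite inE.
elim: n => [|n IH]; first by rewrite big_ord0 minn0.
rewrite big_ord_recr /= IH; case: ltnP => h; lia.
Qed.

Lemma card_setE (T : finType) (P : pred T) : #|[set x | P x]| = \sum_x (P x : nat).
Proof.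
by rewrite -sum1_card (big_mkcond (fun i => i \in _)); apply: eq_bigr => x _; rewrite inE; case: (P x).
Qed.

Definition fy c h := if c == 1 then (h == 3 : nat) else if 2 <= c then 4 else 0.
Definition XV (a1 a2 a3 a4 : nat) :=
  if a1 == 4 then 9 else if a1 == 2 then 8 else if a2 == 2 then 8 else if a3 == 1 then 4 else 0.
Definition phi0 H i := (4 - i) * fy i H.
Definition lhsI n a1 a2 a3 a4 :=
  let H := (1 < n) + a1 + a2 + a3 + a4 in
  (4 - n) * fy n.-1 H + (phi0 H 1 * a1 + phi0 H 2 * a2 + phi0 H 3 * a3 + phi0 H 4 * a4).
Definition chk := all (fun n => all (fun a1 => all (fun a2 => all (fun a3 => all (fun a4 =>
  (n + a1 + 2 * a2 + 3 * a3 + 4 * a4 == 4) ==>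
  (lhsI n a1 a2 a3 a4 == XV (a1 + (n == 1)) (a2 + (n == 2)) (a3 + (n == 3)) (a4 + (n == 4))))
  (iota 0 5)) (iota 0 5)) (iota 0 5)) (iota 0 5)) (iota 1 4).
Lemma chkT : chk. Proof. by vm_compute. Qed.
Lemma arithI n a1 a2 a3 a4 : 0 < n -> n + a1 + 2 * a2 + 3 * a3 + 4 * a4 = 4 ->
  lhsI n a1 a2 a3 a4 = XV (a1 + (n == 1)) (a2 + (n == 2)) (a3 + (n == 3)) (a4 + (n == 4)).
Proof.
move=> n0 hs; have := chkT; rewrite /chk.
move=> /allP /(_ n) h; have {h} := h ltac:(rewrite mem_iota; lia).
move=> /allP /(_ a1) h; have {h} := h ltac:(rewrite mem_iota; lia).
move=> /allP /(_ a2) h; have {h} := h ltac:(rewrite mem_iota; lia).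
move=> /allP /(_ a3) h; have {h} := h ltac:(rewrite mem_iota; lia).
move=> /allP /(_ a4) h; have {h} := h ltac:(rewrite mem_iota; lia).
by rewrite hs eqxx /= => /eqP.
Qed.
Lemma card_sumE (T: finType) (A : {pred T}) : #|A| = \sum_x (x \in A : nat).
Proof. by rewrite -sum1_card big_mkcond /=; apply: eq_bigr => x _; case: (x \in A). Qed.
Lemma sumP (A B : finType) (f : A * B -> nat) : \sum_(v : A * B) f v = \sum_a \sum_b f (a, b).
Proof. by rewrite pair_bigA /=; apply: eq_bigr => -[]. Qed.
Lemma sum_by_val (F : nat -> nat) (T : finType) (P : pred T) (h : T -> nat) :
  (forall x, P x -> h x < 5) ->
  \sum_(x | P x) F (h x) =
  F 0 * #|[set x | P x && (h x == 0)]| + F 1 * #|[set x | P x && (h x == 1)]| +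
  F 2 * #|[set x | P x && (h x == 2)]| + F 3 * #|[set x | P x && (h x == 3)]| +
  F 4 * #|[set x | P x && (h x == 4)]|.
Proof.
move=> hb.
have -> : \sum_(x | P x) F (h x) = \sum_(x | P x) \sum_(i < 5) (h x == i) * F i.
  apply: eq_bigr => x Px; rewrite (bigD1 (Ordinal (hb x Px))) //= eqxx mul1n big1 ?addn0 //.
  move=> i ne; case: eqP => [e|//]; case/eqP: ne; apply: val_inj; by rewrite /= e.
rewrite exchange_big /= !big_ord_recr big_ord0 /= add0n.
have E : forall i, \sum_(x | P x) (h x == i) * F i = F i * #|[set x | P x && (h x == i)]|.
  move=> i; rewrite card_setE big_distrr /= big_mkcond /=; apply: eq_bigr => x _.
  by case: (P x); case: (h x == i); rewrite /= ?muln0 ?muln1 ?mul1n ?mul0n.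
by rewrite !E.
Qed.

Section Inst.
Variable m : nat.
Definition U := ('I_m * 'I_4)%type.
Definition ng (D : {set U}) (g : 'I_m) := #|[set p : 'I_4 | (g, p) \in D]|.
Definition hh (D : {set U}) := #|[set g | 0 < ng D g]|.
Definition y (D : {set U}) (u : U) := if u \in D then 0 else fy (ng D u.1) (hh D).
Definition Del (C : {set U}) (k : U) :=
  [set z : U * 'I_4 | (z.1 \notin C) && (z.2 < y (C :\ k) z.1)].
Definition Acnt (C : {set U}) i := #|[set g | ng C g == i]|.
Definition xv C := XV (Acnt C 1) (Acnt C 2) (Acnt C 3) (Acnt C 4).

Lemma fy_le c h : fy c h <= 4.
Proof. by rewrite /fy; case: ifP => _; [case: (h == 3)|case: ifP]. Qed.
Lemma y_le D u : y D u <= 4.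
Proof. by rewrite /y; case: ifP => // _; apply: fy_le. Qed.
Lemma ng_le D g : ng D g <= 4.
Proof. by rewrite /ng; apply: leq_trans (max_card _) _; rewrite card_ord. Qed.

Lemma sum_ng D : \sum_g ng D g = #|D|.
Proof.
rewrite card_sumE sumP.
by apply: eq_bigr => g _; rewrite /ng card_setE.
Qed.

Lemma ngD1 (C : {set U}) (k : U) g : k \in C -> ng (C :\ k) g = ng C g - (g == k.1).
Proof.
case: k => k1 k2 kC; rewrite /ng /=.
case: eqP => [->|ne].
  rewrite (cardsD1 k2 [set p | (k1, p) \in C]) inE kC add1n subn1 /=.
  by apply: eq_card => p; rewrite !inE xpair_eqE eqxx.
rewrite subn0; apply: eq_card => p; rewrite !inE xpair_eqE.
by move/eqP/negbTE: ne => ->.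
Qed.

Lemma cardDel (C : {set U}) (k : U) : #|Del C k| = \sum_(v : U) (v \notin C) * y (C :\ k) v.
Proof.
rewrite card_setE sumP /=.
apply: eq_bigr => v _; case: (v \notin C); last by rewrite big1.
by rewrite mul1n -card_setE card_lt; apply/minn_idPl; apply: y_le.
Qed.

Lemma sum_notin (C : {set U}) g c : \sum_(p : 'I_4) ((g, p) \notin C) * c = (4 - ng C g) * c.
Proof.
rewrite -big_distrl /= -card_setE; congr (_ * _).
have -> : #|[set p | (g, p) \notin C]| = #|~: [set p : 'I_4 | (g, p) \in C]|.
  by apply: eq_card => p; rewrite !inE.
by rewrite cardsCs setCK card_ord.
Qed.

Lemma DelI (C : {set U}) (k : U) : #|C| = 4 -> k \in C -> #|Del C k| = xv C.
Proof.
move=> c4 kC.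
set H := hh (C :\ k).
set n := ng C k.1.
have n0 : 0 < n.
  rewrite /n /ng card_gt0; apply/set0Pn; exists k.2; by rewrite inE -surjective_pairing.
have E1 : #|Del C k| = \sum_g (4 - ng C g) * fy (ng C g - (g == k.1)) H.
  rewrite cardDel sumP; apply: eq_bigr => g _.
  rewrite -ngD1 // -(sum_notin C g); apply: eq_bigr => p _.
  by rewrite /y in_setD1; case: ((g, p) \in C); rewrite ?andbF.
set a := fun i => #|[set g | (g != k.1) && (ng C g == i)]|.
have nb : forall g, g != k.1 -> ng C g < 5 by move=> g _; rewrite ltnS ng_le.
have E2 : \sum_g (4 - ng C g) * fy (ng C g - (g == k.1)) H =
   (4 - n) * fy n.-1 H + (phi0 H 1 * a 1 + phi0 H 2 * a 2 + phi0 H 3 * a 3 + phi0 H 4 * a 4).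
  rewrite (bigD1 k.1) //= eqxx subn1; congr (_ + _).
  have -> : \sum_(g | g != k.1) (4 - ng C g) * fy (ng C g - (g == k.1)) H =
            \sum_(g | g != k.1) phi0 H (ng C g).
    by apply: eq_bigr => g /negbTE ->; rewrite subn0.
  by rewrite (sum_by_val (phi0 H) nb) /phi0 /fy /= !mul0n add0n.
have E3 : H = (1 < n) + a 1 + a 2 + a 3 + a 4.
  rewrite /H /hh card_setE (bigD1 k.1) //=.
  under eq_bigr => g /negbTE gk do rewrite ngD1 // gk subn0.
  rewrite ngD1 // eqxx subn1 -/n.
  rewrite (sum_by_val (fun i => (0 < i : nat)) nb) /= !mul0n !mul1n add0n.
  have -> : (0 < n.-1) = (1 < n) by case: (n) n0 => [|[|]].
  by rewrite !addnA.
have E4 : n + a 1 + 2 * a 2 + 3 * a 3 + 4 * a 4 = 4.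
  have := sum_ng C; rewrite c4 (bigD1 k.1) //= -/n (sum_by_val (fun i => i) nb) => hs.
  apply: (etrans _ hs); by rewrite /a mul0n add0n mul1n !addnA.
have E5 : forall i, Acnt C i = a i + (n == i).
  move=> i; rewrite /Acnt /a !card_setE (bigD1 k.1) //= -/n addnC; congr (_ + _).
  by rewrite big_mkcond /=; apply: eq_bigr => g _; case: (g != k.1).
rewrite E1 E2 E3 /xv !E5.
have := arithI n0 E4; rewrite /lhsI => ->.
by rewrite !(eq_sym n).
Qed.

End Inst.

Section S.
Variable m : nat.
Local Notation U := (U m).
Definition Gs (g : 'I_m) : {set U} := [set v | v.1 == g].
Definition Ap (u : U) := Gs u.1 :\ u.
Definition Bs (u : U) : {set U} := [set v | v.1 != u.1].

Lemma card_Gs g : #|Gs g| = 4.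
Proof.
have -> : Gs g = setX [set g] [set: 'I_4] by apply/setP => -[a b]; rewrite /Gs !inE andbT.
by rewrite cardsX cards1 cardsT card_ord.
Qed.
Lemma card_Bs u : #|Bs u| = (m - 1) * 4.
Proof.
have -> : Bs u = setX [set~ u.1] [set: 'I_4] by apply/setP => -[a b]; rewrite /Bs !inE andbT.
by rewrite cardsX cardsC1 cardsT !card_ord subn1.
Qed.
Lemma card_Ap u : #|Ap u| = 3.
Proof. have h := cardsD1 u (Gs u.1); rewrite card_Gs /Gs inE eqxx /= in h; rewrite /Ap /Gs; apply/eqP; by rewrite -(eqn_add2l 1) -h. Qed.

Lemma ng_pos (E : {set U}) g : (0 < ng E g) = [exists p, (g, p) \in E].
Proof.
rewrite /ng card_gt0; apply/set0Pn/existsP => -[p]; rewrite ?inE => h; by exists p; rewrite ?inE.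
Qed.

Lemma hh1 (E : {set U}) v : v \in E -> (hh E == 1) = (E \subset Gs v.1).
Proof.
move=> vE; rewrite /hh.
have gv : v.1 \in [set g | 0 < ng E g].
  by rewrite inE ng_pos; apply/existsP; exists v.2; rewrite -surjective_pairing.
apply/idP/idP.
  move=> /cards1P [g eg]; move: gv; rewrite eg inE => /eqP gvg.
  apply/subsetP => w wE; rewrite inE.
  have : w.1 \in [set g | 0 < ng E g].
    by rewrite inE ng_pos; apply/existsP; exists w.2; rewrite -surjective_pairing.
  by rewrite eg inE gvg.
move=> sub; apply/cards1P; exists v.1; apply/setP => g; rewrite !inE ng_pos.
apply/existsP/eqP => [[p gpE]|->]; last by exists v.2; rewrite -surjective_pairing.
by have := subsetP sub _ gpE; rewrite inE /= => /eqP.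
Qed.

Lemma hh_le (E : {set U}) : hh E <= #|E|.
Proof.
rewrite /hh card_setE -sum_ng; apply: leq_sum => g _; by case: (ng E g).
Qed.
Lemma hh_gt0 (E : {set U}) v : v \in E -> 0 < hh E.
Proof.
move=> vE; rewrite /hh card_gt0; apply/set0Pn; exists v.1.
by rewrite inE ng_pos; apply/existsP; exists v.2; rewrite -surjective_pairing.
Qed.

Lemma sum_sub_Gs (E : {set U}) (u v : U) : v \in E ->
  \sum_(g | g != u.1) (E \subset Gs g : nat) = (v.1 != u.1) && (E \subset Gs v.1).
Proof.
move=> vE; case: (boolP (v.1 != u.1)) => hv /=.
  rewrite (bigD1 v.1) //= big1 ?addn0 // => g /andP [_ gv].
  case: (boolP (E \subset Gs g)) => // /subsetP /(_ v vE); rewrite inE => /eqP e.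
  by rewrite e eqxx in gv.
rewrite big1 // => g gu; case: (boolP (E \subset Gs g)) => // /subsetP /(_ v vE); rewrite inE => /eqP e.
by move/negPn/eqP: hv => hv; rewrite -e hv eqxx in gu.
Qed.

Lemma R1count (u : U) : #|[set E : {set U} | (E \subset Bs u) && (#|E| == 2) && (hh E == 1)]| = (m - 1) * 6.
Proof.
have -> : #|[set E : {set U} | (E \subset Bs u) && (#|E| == 2) && (hh E == 1)]| =
  \sum_(E : {set U}) \sum_(g | g != u.1) ((#|E| == 2) && (E \subset Gs g) : nat).
  rewrite card_setE; apply: eq_bigr => E _.
  case: (boolP (#|E| == 2)) => e2 /=; last by rewrite andbF big1 //; case: (E \subset Bs u).
  have [v vE] : exists v, v \in E.
    by apply/set0Pn; rewrite -card_gt0 (eqP e2).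
  rewrite (sum_sub_Gs u vE) (hh1 vE) andbT.
  case: (boolP (E \subset Gs v.1)) => sG; rewrite ?andbF ?andbT //.
  congr (nat_of_bool _); apply/idP/idP => [sB|hv].
    by move/subsetP: sB => /(_ v vE); rewrite inE.
  apply/subsetP => w wE; move/subsetP: sG => /(_ w wE); rewrite !inE => /eqP ->; exact: hv.
rewrite exchange_big /=.
have -> : (m - 1) * 6 = \sum_(g | g != u.1) 6.
  by rewrite sum_nat_const cardC1 card_ord subn1.
apply: eq_bigr => g _.
have := cards_draws (Gs g) 2; rewrite card_Gs => h; rewrite (_ : 6 = 'C(4, 2)) // -h.
by rewrite card_setE; apply: eq_bigr => E _; rewrite andbC.
Qed.

Lemma Qcount (u : U) : #|[set E : {set U} | (E \subset Bs u) && (#|E| == 2) && (hh E == 2)]| = 8 * (m - 1) * (m - 2).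
Proof.
have T2 : #|[set E : {set U} | (E \subset Bs u) && (#|E| == 2)]| =
  #|[set E : {set U} | (E \subset Bs u) && (#|E| == 2) && (hh E == 2)]| +
  #|[set E : {set U} | (E \subset Bs u) && (#|E| == 2) && (hh E == 1)]|.
  rewrite !card_setE -big_split /=; apply: eq_bigr => E _.
  case: (boolP ((E \subset Bs u) && (#|E| == 2))) => //= /andP [_ e2].
  have [v vE] : exists v, v \in E by apply/set0Pn; rewrite -card_gt0 (eqP e2).
  have := hh_le E; have := hh_gt0 vE; rewrite (eqP e2).
  by case: (hh E) => [|[|[|]]].
move: T2; rewrite R1count cards_draws card_Bs bin2.
have -> : (m - 1) * 4 * ((m - 1) * 4).-1 = (2 * (m - 1) * ((m - 1) * 4).-1).*2.
  by rewrite -mul2n; lia.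
rewrite doubleK => h.
have : 2 * (m - 1) * ((m - 1) * 4).-1 = 8 * (m - 1) * (m - 2) + (m - 1) * 6.
  case: m {h} => [|[|k]] //=; rewrite !subn1 /=; nia.
lia.
Qed.

Lemma ApBs_disj (u : U) : Ap u :&: Bs u = set0.
Proof. by apply/setP => v; rewrite !inE; case: (v.1 == u.1); rewrite ?andbF. Qed.

Lemma uniq_split (u : U) (D : {set U}) :
  #|[set p : {set U} * {set U} | (p.1 \subset Ap u) && (p.2 \subset Bs u) && (p.1 :|: p.2 == D)]|
  = (u \notin D).
Proof.
case: (boolP (u \in D)) => uD /=.
  apply/eqP; rewrite cards_eq0; apply/eqP/setP => -[S E]; rewrite !inE /=.
  apply/negP => /andP [/andP [sS sE] /eqP eD]; move: uD; rewrite -eD inE => /orP [].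
    by move/(subsetP sS); rewrite !inE eqxx.
  by move/(subsetP sE); rewrite !inE eqxx.
apply/eqP/cards1P; exists (D :&: Ap u, D :&: Bs u); apply/setP => -[S E]; rewrite !inE /=.
apply/idP/eqP.
  move=> /andP [/andP [sS sE] /eqP eD]; subst D.
  rewrite setIUl setIUl (setIidPl sS) (setIidPl sE).
  have h1 : E :&: Ap u = set0.
    by apply/eqP; rewrite -subset0 -(ApBs_disj u) setIC setISS.
  have h2 : S :&: Bs u = set0.
    by apply/eqP; rewrite -subset0 -(ApBs_disj u) setISS.
  by rewrite h1 h2 setU0 set0U.
case=> -> ->; rewrite !subsetIr /= -setIUr.
have -> : Ap u :|: Bs u = ~: [set u].
  apply/setP => v; rewrite !inE; case: eqP => [-> | _]; first by rewrite eqxx.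
  by case: (v.1 == u.1).
apply/eqP/setIidPl; apply/subsetP => v vD; rewrite !inE; apply: contraNneq uD => <-; done.
Qed.

Lemma ng_SE (u : U) (S E : {set U}) : S \subset Ap u -> E \subset Bs u -> ng (S :|: E) u.1 = #|S|.
Proof.
move=> sS sE.
have -> : #|S| = #|(fun p => (u.1, p)) @: [set p | (u.1, p) \in S :|: E]|.
  apply: eq_card => v; apply/idP/imsetP.
    move=> vS; exists v.2; last first; move: vS.
      by move=> vS; move/(subsetP sS): vS; rewrite !inE => /andP [_ /eqP <-]; rewrite -surjective_pairing.
    by move=> vS; have := vS; move/(subsetP sS): vS; rewrite !inE => /andP [_ /eqP <-]; rewrite -surjective_pairing => ->.
  move=> [p]; rewrite !inE => /orP [h ->|h] //.
  by move/(subsetP sE): h; rewrite !inE eqxx.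
rewrite card_imset //; by move=> p q [].
Qed.

Lemma ng_SE' (u : U) (S E : {set U}) g : S \subset Ap u -> g != u.1 -> ng (S :|: E) g = ng E g.
Proof.
move=> sS gu; apply: eq_card => p; rewrite !inE.
case: (boolP ((g, p) \in S)) => //= h; move/(subsetP sS): h; rewrite !inE /= => /andP [_ e].
by rewrite e in gu.
Qed.

Lemma ngE0 (u : U) (E : {set U}) : E \subset Bs u -> ng E u.1 = 0.
Proof.
move=> sE; apply/eqP; rewrite cards_eq0; apply/eqP/setP => p; rewrite !inE.
by apply/negP => /(subsetP sE); rewrite !inE eqxx.
Qed.

Lemma hh_SE (u : U) (S E : {set U}) : S \subset Ap u -> E \subset Bs u -> hh (S :|: E) = (0 < #|S|) + hh E.
Proof.
move=> sS sE; rewrite /hh !card_setE (bigD1 u.1) //= (bigD1 u.1 (P := xpredT)) //=.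
rewrite ng_SE // ngE0 // add0n; congr (_ + _); apply: eq_bigr => g gu.
by rewrite (ng_SE' _ sS).
Qed.

Lemma card_SE (u : U) (S E : {set U}) : S \subset Ap u -> E \subset Bs u -> #|S :|: E| = #|S| + #|E|.
Proof.
move=> sS sE; rewrite cardsU.
have -> : S :&: E = set0.
  by apply/eqP; rewrite -subset0 -(ApBs_disj u) setISS.
by rewrite cards0 subn0.
Qed.

Definition Psi (u : U) c := \sum_(E : {set U} | E \subset Bs u) (c + #|E| == 3) * fy c ((0 < c) + hh E).

Lemma cntBs (u : U) (c : nat) (F : nat) :
  \sum_(E : {set U} | E \subset Bs u) (#|E| == c) * F = 'C((m - 1) * 4, c) * F.
Proof.
rewrite -(card_Bs u) -cards_draws -sum_nat_cond_const big_mkcond [RHS]big_mkcond /=.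
by apply: eq_bigr => E _; case: (E \subset Bs u); case: (#|E| == c); rewrite ?mul1n ?mul0n.
Qed.

Lemma Psi_val (u : U) :
  Psi u 0 = 0 /\ Psi u 1 = 8 * (m - 1) * (m - 2) /\ Psi u 2 = (m - 1) * 4 * 4 /\ Psi u 3 = 4.
Proof.
split; first by rewrite /Psi big1 // => E _; rewrite /fy muln0.
split.
  rewrite /Psi -(Qcount u) card_setE big_mkcond /=; apply: eq_bigr => E _.
  case: (E \subset Bs u) => //=; rewrite /fy /=.
  by rewrite !add1n !eqSS; case: (#|E| == 2); case: (hh E == 2).
split.
  rewrite /Psi -(bin1 ((m - 1) * 4)) -(cntBs u); apply: eq_bigr => E _.
  by rewrite /fy /= (_ : (2 + #|E| == 3) = (#|E| == 1)).
rewrite /Psi; transitivity ('C((m - 1) * 4, 0) * 4); last by rewrite bin0.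
rewrite -(cntBs u); apply: eq_bigr => E _.
by rewrite /fy /= (_ : (3 + #|E| == 3) = (#|E| == 0)) // -{2}(addn0 3) eqn_add2l.
Qed.

Lemma s_count (u : U) :
  \sum_(D : {set U}) (#|D| == 3) * y D u = 24 * (m - 1) * (m - 2) + 48 * (m - 1) + 4.
Proof.
pose G (D : {set U}) := (#|D| == 3) * fy (ng D u.1) (hh D).
pose P (p : {set U} * {set U}) := (p.1 \subset Ap u) && (p.2 \subset Bs u).
have E1 : \sum_(D : {set U}) (#|D| == 3) * y D u = \sum_(D : {set U}) (u \notin D) * G D.
  apply: eq_bigr => D _; rewrite /y /G; case: (u \in D) => /=; by rewrite ?muln0 ?mul0n ?mul1n.
have E2 : \sum_(D : {set U}) (u \notin D) * G D = \sum_(p | P p) G (p.1 :|: p.2).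
  rewrite (partition_big (fun p => p.1 :|: p.2) xpredT) //=.
  apply: eq_bigr => D _.
  rewrite -(uniq_split u D) -sum_nat_cond_const.
  by apply: eq_bigr => p /andP [_ /eqP ->].
have E3 : \sum_(p | P p) G (p.1 :|: p.2) =
   \sum_(S : {set U} | S \subset Ap u) Psi u #|S|.
  rewrite -(pair_big (fun S : {set U} => S \subset Ap u) (fun E : {set U} => E \subset Bs u)
     (fun S E => G (S :|: E))) /=.
  apply: eq_bigr => S sS; apply: eq_bigr => E sE.
  by rewrite /G (card_SE sS sE) (ng_SE sS sE) (hh_SE sS sE).
have nb : forall S : {set U}, S \subset Ap u -> #|S| < 5.
  by move=> S sS; rewrite ltnS; apply: leq_trans (subset_leq_card sS) _; rewrite card_Ap.
rewrite E1 E2 E3 (sum_by_val (Psi u) nb).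
have cd : forall c, #|[set S : {set U} | (S \subset Ap u) && (#|S| == c)]| = 'C(3, c).
  by move=> c; have := cards_draws (Ap u) c; rewrite card_Ap => <-.
rewrite !cd.
have [p0 [p1 [p2 p3]]] := Psi_val u.
rewrite p0 p1 p2 p3.
rewrite (_ : 'C(3, 1) = 3) // (_ : 'C(3, 2) = 3) // (_ : 'C(3, 3) = 1) // (_ : 'C(3, 4) = 0) //.
lia.
Qed.

End S.

Definition swp (T : eqType) (a b x : T) := if x == a then b else if x == b then a else x.
Lemma swpK (T : eqType) (a b : T) : involutive (swp a b).
Proof.
move=> x; rewrite /swp.
case: (eqVneq x a) => [->|xa]; first by rewrite eqxx; case: eqP => // ->.
case: (eqVneq x b) => [->|xb]; first by rewrite eqxx.
by rewrite (negbTE xa) (negbTE xb).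
Qed.
Lemma swpL (T : eqType) (a b : T) : swp a b a = b.
Proof. by rewrite /swp eqxx. Qed.

Section Sym.
Variable m : nat.
Local Notation U := (U m).
Variables (k k' : U).
Definition sg (v : U) : U := (swp k.1 k'.1 v.1, swp k.2 k'.2 v.2).
Lemma sgK : involutive sg.
Proof. by move=> v; rewrite /sg /= !swpK -surjective_pairing. Qed.
Lemma sg_inj : injective sg. Proof. exact: inv_inj sgK. Qed.
Lemma mem_sg (D : {set U}) v : (v \in sg @: D) = (sg v \in D).
Proof. by rewrite (can2_imset_pre _ sgK sgK) inE. Qed.
Lemma card_sg (D : {set U}) : #|sg @: D| = #|D|.
Proof. by rewrite card_imset //; apply: sg_inj. Qed.
Lemma ng_sg (D : {set U}) g : ng (sg @: D) g = ng D (swp k.1 k'.1 g).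
Proof.
rewrite /ng.
have -> : [set p | (g, p) \in sg @: D] = swp k.2 k'.2 @: [set p | (swp k.1 k'.1 g, p) \in D].
  rewrite (can2_imset_pre _ (swpK _ _) (swpK _ _)); apply/setP => p.
  by rewrite !inE mem_sg.
by rewrite card_imset //; apply: inv_inj (swpK _ _).
Qed.
Lemma hh_sg (D : {set U}) : hh (sg @: D) = hh D.
Proof.
rewrite /hh.
have -> : [set g | 0 < ng (sg @: D) g] = swp k.1 k'.1 @: [set g | 0 < ng D g].
  rewrite (can2_imset_pre _ (swpK _ _) (swpK _ _)); apply/setP => g.
  by rewrite !inE ng_sg.
by rewrite card_imset //; apply: inv_inj (swpK _ _).
Qed.
Lemma y_sg (D : {set U}) v : y (sg @: D) (sg v) = y D v.
Proof. by rewrite /y mem_sg sgK ng_sg hh_sg /sg /= swpK. Qed.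
End Sym.

Section Tf.
Variable X : finType.
Definition tf (A B : {set X}) (a : X) := nth a (enum B) (index a (enum A)).
Lemma tf_in (A B : {set X}) a : #|A| = #|B| -> a \in A -> tf A B a \in B.
Proof.
move=> e aA; rewrite /tf -mem_enum mem_nth // -cardE -e cardE index_mem mem_enum //.
Qed.
Lemma tfK (A B : {set X}) a : #|A| = #|B| -> a \in A -> tf B A (tf A B a) = a.
Proof.
move=> e aA; rewrite /tf.
have ia : index a (enum A) < size (enum B) by rewrite -cardE -e cardE index_mem mem_enum.
rewrite index_uniq ?enum_uniq //.
rewrite (set_nth_default a) ?nth_index ?mem_enum //.
by rewrite -cardE e cardE.
Qed.
End Tf.

Section Inst2.
Variable m : nat.
Hypothesis m0 : 0 < m.
Local Notation U := (U m).
Definition u0 : U := (Ordinal m0, ord0).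
Definition Traw := ({set U} * U * 'I_4)%type.
Definition trP (x : Traw) := (#|x.1.1| == 3) && (x.2 < y x.1.1 x.1.2).
Definition TrT := {x : Traw | trP x}.
Definition cano (C : {set U}) := odflt u0 [pick k in C].
Definition Praw := ({set U} * (U * 'I_4))%type.
Definition pP (p : Praw) := (#|p.1| == 4) && (p.2 \in Del p.1 (cano p.1)).
Definition PT := {p : Praw | pP p}.

Definition srcU (t : TrT) := (val t).1.2.
Definition rcvU (t : TrT) (k : U) := (k \notin (val t).1.1) && (k != (val t).1.2).
Definition cmpU (p : PT) (k : U) := k \in (val p).1.
Definition pkraw (t : TrT) (k : U) : Praw :=
  let C := k |: (val t).1.1 in (C, tf (Del C k) (Del C (cano C)) ((val t).1.2, (val t).2)).
Definition trraw (p : PT) (k : U) : Traw :=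
  let C := (val p).1 in let z := tf (Del C (cano C)) (Del C k) (val p).2 in (C :\ k, z.1, z.2).
Variables (p0 : PT) (t0 : TrT).
Definition pkU t k := insubd p0 (pkraw t k).
Definition trU p k := insubd t0 (trraw p k).

Lemma cano_in (C : {set U}) : #|C| = 4 -> cano C \in C.
Proof.
move=> c4; rewrite /cano; case: pickP => [x //|h].
by have := eq_card0 h; rewrite c4.
Qed.

Lemma Del_eq (C : {set U}) k k2 : #|C| = 4 -> k \in C -> k2 \in C -> #|Del C k| = #|Del C k2|.
Proof. by move=> c4 kC k2C; rewrite !DelI. Qed.

Lemma y_pos_notin (D : {set U}) u i : i < y D u -> u \notin D.
Proof. by rewrite /y; case: (u \in D). Qed.

Lemma pk_ok t k : rcvU t k -> pP (pkraw t k).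
Proof.
case: t => -[[D u] i] tp; have /andP [/eqP d3 iy] := tp; rewrite /rcvU /= => /andP [kD ku].
rewrite /pP /pkraw /= cardsU1 kD d3 eqxx /=.
have c4 : #|k |: D| = 4 by rewrite cardsU1 kD d3.
apply: tf_in; first by apply: Del_eq; rewrite ?cano_in // setU11.
rewrite inE /= in_setU1 negb_or (y_pos_notin iy) eq_sym ku /= setU1K //.
Qed.

Lemma pk_val t k : rcvU t k -> val (pkU t k) = pkraw t k.
Proof. by move=> h; rewrite /pkU insubdK //; apply: pk_ok. Qed.

Lemma A1U t k : rcvU t k -> cmpU (pkU t k) k.
Proof. by move=> h; rewrite /cmpU pk_val // /pkraw /= setU11. Qed.
Lemma A2U t k k2 : rcvU t k -> rcvU t k2 -> k != k2 -> ~~ cmpU (pkU t k2) k.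
Proof.
move=> h h2 kk; rewrite /cmpU pk_val // /pkraw /= in_setU1 negb_or kk /=.
by case/andP: h.
Qed.
Lemma A3U t k : rcvU t k -> ~~ cmpU (pkU t k) (srcU t).
Proof.
move=> h; rewrite /cmpU pk_val // /pkraw /srcU /= in_setU1 negb_or.
case/andP: h => _ h; rewrite eq_sym h /=; case: t {h} => -[[D u] i] tp; have /andP [_ iy] := tp; exact: y_pos_notin iy.
Qed.

Lemma tr_ok p k : cmpU p k -> trP (trraw p k).
Proof.
case: p => -[C z] pp; have /andP [/eqP c4 zD] := pp; rewrite /cmpU /= => kC.
rewrite /trP /trraw /=.
have : tf (Del C (cano C)) (Del C k) z \in Del C k.
  by apply: tf_in => //; apply: Del_eq => //; apply: cano_in.
rewrite inE => /andP [_ ->]; rewrite andbT.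
have := cardsD1 k C; rewrite kC c4 add1n => -[e]; by rewrite -e.
Qed.

Lemma A4U p k : cmpU p k -> rcvU (trU p k) k /\ pkU (trU p k) k = p.
Proof.
move=> h.
have tv : val (trU p k) = trraw p k by rewrite /trU insubdK //; apply: tr_ok.
have /andP [/eqP c4 zD] := valP p.
rewrite /cmpU in h.
have zin : tf (Del (val p).1 (cano (val p).1)) (Del (val p).1 k) (val p).2 \in Del (val p).1 k.
  by apply: tf_in => //; apply: Del_eq => //; apply: cano_in.
have rt : rcvU (trU p k) k.
  rewrite /rcvU tv /trraw /= !inE eqxx /=.
  move: zin; rewrite inE => /andP [zC _]; apply: contraNneq zC => <-; exact: h.
split; first by [].
apply: val_inj; rewrite pk_val // /pkraw tv /trraw /= setD1K //.
rewrite -surjective_pairing tfK; last by [].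
  by rewrite [RHS]surjective_pairing.
apply: Del_eq => //; apply: cano_in => //.
Qed.
End Inst2.

Lemma card_sigQ (T : finType) (P : pred T) (Q : pred T) :
  #|[set t : {x | P x} | Q (val t)]| = #|[set x | P x && Q x]|.
Proof.
rewrite -(card_imset _ val_inj); apply: eq_card => x; apply/imsetP/idP.
  by move=> [t]; rewrite !inE => qt ->; rewrite (valP t) qt.
rewrite inE => /andP [px qx]; exists (Sub x px) => //; by rewrite inE SubK.
Qed.

Lemma swpR (T : eqType) (a b : T) : swp a b b = a.
Proof. by rewrite /swp eqxx; case: eqP. Qed.

Section Cnt.
Variable m : nat.
Local Notation U := (U m).

Lemma card_U : #|{: 'I_m * 'I_4}| = m * 4.
Proof. by rewrite card_prod !card_ord. Qed.

Lemma card_TrT : #|{: TrT m}| = (m * 4) * (24 * (m - 1) * (m - 2) + 48 * (m - 1) + 4).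
Proof.
rewrite card_sig card_sumE sumP.
have -> : \sum_(a : {set U} * U) \sum_(b : 'I_4) ((a, b) \in [pred x | trP x] : nat)
  = \sum_(a : {set U} * U) (#|a.1| == 3) * y a.1 a.2.
  apply: eq_bigr => -[D u] _; rewrite -card_setE.
  have -> : [set x | (D, u, x) \in [pred x | trP x]] = [set x : 'I_4 | (#|D| == 3) && (x < y D u)].
    by apply/setP => i; rewrite !inE.
  case: (#|D| == 3) => /=; last by rewrite mul0n; apply: eq_card0 => i; rewrite !inE.
  by rewrite mul1n card_lt; apply/minn_idPl; apply: y_le.
rewrite sumP exchange_big /=.
under eq_bigr do rewrite s_count.
by rewrite sum_nat_const cardT -cardE card_U.
Qed.

Definition cnt_rcv (k : U) := #|[set t : TrT m | rcvU t k]|.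

Lemma cnt_rcvE k : cnt_rcv k =
  \sum_(D : {set U}) \sum_(u : U) ((#|D| == 3) && (k \notin D) && (k != u)) * y D u.
Proof.
rewrite /cnt_rcv /rcvU (@card_sigQ _ (@trP m) (fun x : Traw m => (k \notin x.1.1) && (k != x.1.2))) card_setE sumP sumP.
apply: eq_bigr => D _; apply: eq_bigr => u _; rewrite -card_setE.
have -> : [set b : 'I_4 | trP (D, u, b) && ((k \notin (D, u, b).1.1) && (k != (D, u, b).1.2))]
  = [set b : 'I_4 | ((#|D| == 3) && (k \notin D) && (k != u)) && (b < y D u)].
  apply/setP => i; rewrite !inE /trP /=.
  by case: (#|D| == 3); case: (k \notin D); case: (k != u); case: (i < y D u).
case: ((#|D| == 3) && (k \notin D) && (k != u)) => /=.
  by rewrite mul1n card_lt; apply/minn_idPl; apply: y_le.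
by rewrite mul0n; apply: eq_card0 => i; rewrite !inE.
Qed.

Lemma sum_cnt_rcv : \sum_(k : U) cnt_rcv k = (m * 4 - 4) * #|{: TrT m}|.
Proof.
rewrite /cnt_rcv.
under eq_bigr do rewrite card_setE.
rewrite exchange_big /= (eq_bigr (fun _ => m * 4 - 4)); last first.
  move=> t _; rewrite -card_setE.
case: t => -[[D u] i] tp; have /andP [/eqP d3 iy] := tp; rewrite /rcvU /=.
have uD := y_pos_notin iy.
have -> : [set k : U | (k \notin D) && (k != u)] = ~: (u |: D).
  by apply/setP => k; rewrite !inE negb_or andbC.
  by rewrite cardsCs setCK cardsU1 uD d3 card_U.
by rewrite sum_nat_const cardT -cardE mulnC.
Qed.

Lemma cnt_sym k k2 : cnt_rcv k2 = cnt_rcv k.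
Proof.
rewrite !cnt_rcvE.
rewrite (reindex_inj (imset_inj (@sg_inj m k k2))) /=.
apply: eq_bigr => D _.
rewrite (reindex_inj (@sg_inj m k k2)) /=.
apply: eq_bigr => u _.
rewrite y_sg card_sg mem_sg.
have e : sg k k2 k2 = k by rewrite /sg !swpR -surjective_pairing.
have e2 := inj_eq (@sg_inj m k k2) k2 (sg k k2 u); rewrite sgK in e2.
by rewrite -e2 e.
Qed.
End Cnt.


Section Cnt2.
Variable m : nat.
Hypothesis m0 : 0 < m.
Local Notation U := (U m).

Lemma pcount (k : U) : #|[set p : PT m0 | cmpU p k]| = cnt_rcv k.
Proof.
rewrite /cmpU (@card_sigQ _ (@pP m m0) (fun x : Praw m => k \in x.1)) card_setE sumP.
have -> : \sum_(C : {set U}) \sum_(z : U * 'I_4) (pP m0 (C, z) && (k \in (C, z).1) : nat)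
   = \sum_(C : {set U} | k \in C) (#|C| == 4) * #|Del C k|.
  rewrite [RHS]big_mkcond /=; apply: eq_bigr => C _.
  case: (boolP (k \in C)) => kC /=; last by rewrite big1 // => z _; rewrite andbF.
  case: (boolP (#|C| == 4)) => c4 /=; last by rewrite big1 // => z _; rewrite /pP /= (negbTE c4).
  rewrite mul1n -(Del_eq (eqP c4) (cano_in m0 (eqP c4)) kC) card_sumE.
  by apply: eq_bigr => z _; rewrite /pP /= c4 andbT.
rewrite (reindex_onto (fun D => k |: D) (fun C => C :\ k)) /=; last first.
  by move=> C kC; rewrite setD1K.
have -> : \sum_(D | (k \in k |: D) && ((k |: D) :\ k == D)) (#|k |: D| == 4) * #|Del (k |: D) k|
   = \sum_(D : {set U} | k \notin D) (#|D| == 3) * \sum_(v : U) (v != k) * y D v.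
  apply: eq_big => D.
    rewrite setU11 /=; apply/eqP/idP => [e|kD]; last by rewrite setU1K.
    apply/negP => kD; have : k \in (k |: D) :\ k by rewrite e.
    by rewrite !inE eqxx.
  move=> /andP [_ /eqP e]; have kD : k \notin D by rewrite -e !inE eqxx.
  rewrite cardsU1 kD add1n eqSS cardDel setU1K //; congr (_ * _).
  apply: eq_bigr => v _; rewrite in_setU1 negb_or /=.
  case: (boolP (v \in D)) => vD; last by rewrite andbT.
  by rewrite /y vD /= !muln0.
rewrite cnt_rcvE big_mkcond /=; apply: eq_bigr => D _.
case: (boolP (k \notin D)) => kD; last by rewrite big1 // => u _; rewrite andbF andFb.
rewrite big_distrr /=; apply: eq_bigr => u _.
rewrite andbT (eq_sym k u); by case: (#|D| == 3); case: (u != k); rewrite ?mul1n ?mul0n.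
Qed.

Lemma sum_pcount : \sum_(k : U) #|[set p : PT m0 | cmpU p k]| = 4 * #|{: PT m0}|.
Proof.
under eq_bigr do rewrite card_setE.
rewrite exchange_big /= (eq_bigr (fun _ => 4)); last first.
  move=> p _; rewrite -card_setE.
  have /andP [/eqP c4 _] := valP p.
  by apply: (etrans _ c4); apply: eq_card => k; rewrite inE.
by rewrite sum_nat_const cardT -cardE mulnC.
Qed.

Lemma main_counts (k : U) :
  #|{: PT m0}| = (m - 1) * #|{: TrT m}| /\
  m * #|[set p : PT m0 | ~~ cmpU p k]| = (m - 1) * #|{: PT m0}|.
Proof.
have hc : forall k2 : U, cnt_rcv k2 = cnt_rcv k by move=> k2; apply: cnt_sym.
have s1 := sum_cnt_rcv m.
rewrite (eq_bigr (fun _ => cnt_rcv k)) in s1; last by move=> k2 _; apply: hc.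
rewrite sum_nat_const cardT -cardE card_U in s1.
have s2 := sum_pcount.
rewrite (eq_bigr (fun _ => cnt_rcv k)) in s2; last by move=> k2 _; rewrite pcount hc.
rewrite sum_nat_const cardT -cardE card_U in s2.
have e1 : #|{: PT m0}| = (m - 1) * #|{: TrT m}| by nia.
have e2 : #|[set p : PT m0 | ~~ cmpU p k]| = #|{: PT m0}| - cnt_rcv k.
  rewrite -pcount; have := cardsC [set p : PT m0 | cmpU p k].
  rewrite cardT -cardE => <-; rewrite addKn; apply: eq_card => p; by rewrite !inE.
split => //; rewrite e2; nia.
Qed.
End Cnt2.

Import Order.TTheory GRing.Theory Num.Theory.

Definition elt (T : finType) (h : 0 < #|{: T}|) : T := enum_val (Ordinal h).

Lemma rat_step (m N a F T : nat) (M : rat) : 1 < m -> 0 < N -> 0 < T ->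
  ((4 * m)%:R * M / N%:R = (4 * m - 4)%:R)%R ->
  F = (m - 1) * T -> m * a = (m - 1) * F ->
  ((N * a)%:R <= M * F%:R)%R /\ (T%:R / F%:R = N%:R / M - 1)%R.
Proof.
move=> m1 N0 T0 hM hF ha.
have N0' : (N%:R != 0 :> rat)%R by rewrite pnatr_eq0 -lt0n.
have m0' : (m%:R != 0 :> rat)%R by rewrite pnatr_eq0 -lt0n; lia.
have T0' : (T%:R != 0 :> rat)%R by rewrite pnatr_eq0 -lt0n.
have em1 : ((m - 1)%:R = m%:R - 1 :> rat)%R by rewrite natrB //; lia.
have m1' : (m%:R - 1 != 0 :> rat)%R by rewrite -em1 pnatr_eq0 -lt0n; lia.
have e4 : ((4 * m - 4)%:R = 4%:R * (m%:R - 1) :> rat)%R.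
  by rewrite (_ : 4 * m - 4 = 4 * (m - 1)) ?natrM ?em1 //; lia.
have eM : M = ((m%:R - 1) * N%:R / m%:R)%R.
  move: hM; rewrite e4 natrM => hM.
  have h4 : (4%:R != 0 :> rat)%R by rewrite pnatr_eq0.
  have : M = ((4%:R * (m%:R - 1)) * N%:R / (4%:R * m%:R))%R.
    by rewrite -hM; field; rewrite ?h4 ?m0' ?N0'.
  move=> ->; field; by rewrite ?h4 ?m0'.
have ha' : (m%:R * a%:R = (m%:R - 1) * F%:R :> rat)%R by rewrite -em1 -!natrM ha.
have aE : (a%:R = (m%:R - 1) * F%:R / m%:R :> rat)%R by rewrite -ha' mulrC mulKf.
have hF' : (F%:R = (m%:R - 1) * T%:R :> rat)%R by rewrite hF natrM em1.
split.
  suff -> : ((N * a)%:R = M * F%:R :> rat)%R by rewrite lexx.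
  rewrite natrM aE eM; field; done.
rewrite hF' eM; field.
by rewrite m1' N0' T0' m0'.
Qed.

Lemma arithF j : 4 * (j + 2) * (4 * (j + 1)) * (3 * (4 * (j + 2)) * (4 * (j+1)) + 8) =
     8 * ((j + 1) * ((j + 2) * 4 * (24 * (j + 1) * j + 48 * (j + 1) + 4))).
Proof. ring. Qed.

Theorem mainTheorem8 (m N : nat) (M : rat) :
  5 <= m -> 1 <= N ->
  (0 < M)%R -> (M <= N%:R)%R ->
  ((4 * m)%:R * M / N%:R = (4 * m - 4)%:R)%R ->
  achievable_with N (4 * m) M (N%:R / M - 1)%R
    ((4 * m) * (4 * m - 4) * (3 * (4 * m) * (4 * m - 4) + 8) %/ 8).
Proof.
move=> m5 N1 M0 MN hM.
have m0 : 0 < m by apply: leq_trans m5.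
have m1 : 1 < m by apply: leq_trans m5.
have hK : 4 * m = #|{: U m}| by rewrite card_U mulnC.
pose eU (k : 'I_(4 * m)) : U m := enum_val (cast_ord hK k).
pose eU' (u : U m) : 'I_(4 * m) := cast_ord (esym hK) (enum_rank u).
have eUK : cancel eU' eU by move=> u; rewrite /eU /eU' cast_ordKV enum_rankK.
have eU'K : cancel eU eU' by move=> k; rewrite /eU /eU' enum_valK cast_ordK.
have eU_inj : injective eU := can_inj eU'K.
set T := #|{: TrT m}|.
have hT : T = (m * 4) * (24 * (m - 1) * (m - 2) + 48 * (m - 1) + 4) by rewrite /T card_TrT.
have T0 : 0 < T by rewrite hT muln_gt0 addn_gt0 orbT andbT muln_gt0 m0.
have [eP _] := main_counts m0 (u0 m0).
set F := (4 * m) * (4 * m - 4) * (3 * (4 * m) * (4 * m - 4) + 8) %/ 8.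
have hF : F = (m - 1) * T.
  rewrite /F hT.
  case: (m) m5 => [|[|j]] // _.
  have -> : 4 * j.+2 - 4 = 4 * (j + 1) by lia.
  have -> : j.+2 - 1 = j + 1 by rewrite subn1 addn1.
  have -> : j.+2 - 2 = j by rewrite subn2.
  rewrite -(addn2 j) arithF.
  by rewrite mulKn.
have hP : #|{: PT m0}| = F by rewrite eP hF.
have F0 : 0 < F by rewrite hF muln_gt0 T0 subn_gt0 m1.
have P0 : 0 < #|{: PT m0}| by rewrite hP.
pose p0 := elt P0.
pose t0 := elt T0.
apply: (@gen_ach N (4 * m) F M (N%:R / M - 1)%R (PT m0) (TrT m)
   (fun p k => cmpU p (eU k)) (fun t => eU' (srcU t)) (fun t k => rcvU t (eU k))
   (fun t k => pkU p0 t (eU k)) (fun p k => trU t0 p (eU k)) hP).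
- move=> t k k' h1 h2 kk; apply: A2U => //; by rewrite (inj_eq eU_inj).
- by move=> t k h; rewrite eUK; apply: A3U.
- by move=> p k h; apply: A4U.
- move=> k; have [_ ec] := main_counts m0 (eU k).
  by rewrite hP in ec; have [] := rat_step m1 N1 T0 hM hF ec.
- by have [_ ec] := main_counts m0 (u0 m0); rewrite hP in ec; have [] := rat_step m1 N1 T0 hM hF ec.
- exact: F0.
- exact: N1.
Qed.
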